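(* Let $\pi:(X,T)\to(Y,S)$ be an almost one-to-one factor map between minimal systems. Then $(X,T)$ is syndetically equicontinuous if and only if $(Y,S)$ is syndetically equicontinuous.
   Context: Systems: compact metric $(X,\varrho)$ with continuous surjection; minimal: every orbit dense. Factor map: continuous surjection $\pi$ with $\pi\circ T=S\circ\pi$; almost one-to-one: $\{y\in Y:\pi^{-1}(y)\text{ is a singleton}\}$ is dense in $Y$. $S_T(U,\delta)=\{n\in\mathbb{N}:\exists x_1,x_2\in U,\ \varrho(T^nx_1,T^nx_2)>\delta\}$, $J_T(U,\delta)=\mathbb N\setminus S_T(U,\delta)$. A point $x$ is syndetically equicontinuous if for every $\varepsilon>0$ some neighborhood $U$ of $x$ has $J_T(U,\varepsilon)$ syndetic (bounded gaps); a system is syndetically equicontinuous if every point is. *)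

(* Defs.v *)
From Stdlib Require Import Reals List.
Open Scope R_scope.

Definition is_metric {X : Type} (d : X -> X -> R) : Prop :=
  (forall x y, 0 <= d x y) /\
  (forall x y, d x y = 0 <-> x = y) /\
  (forall x y, d x y = d y x) /\
  (forall x y z, d x z <= d x y + d y z).

Definition is_open {X : Type} (d : X -> X -> R) (U : X -> Prop) : Prop :=
  forall x, U x -> exists r, 0 < r /\ forall y, d x y < r -> U y.

Definition is_compact {X : Type} (d : X -> X -> R) : Prop :=
  forall F : (X -> Prop) -> Prop,
    (forall U, F U -> is_open d U) ->
    (forall x, exists U, F U /\ U x) ->
    exists l : list (X -> Prop),
      (forall U, In U l -> F U) /\ (forall x, exists U, In U l /\ U x).

Definition continuous_map {X Y : Type} (dX : X -> X -> R) (dY : Y -> Y -> R)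
  (f : X -> Y) : Prop :=
  forall x eps, 0 < eps -> exists del, 0 < del /\
    forall x', dX x x' < del -> dY (f x) (f x') < eps.

Definition surjective {X Y : Type} (f : X -> Y) : Prop :=
  forall y, exists x, f x = y.

Definition is_system {X : Type} (d : X -> X -> R) (T : X -> X) : Prop :=
  is_metric d /\ is_compact d /\ continuous_map d d T /\ surjective T.

Definition minimal {X : Type} (d : X -> X -> R) (T : X -> X) : Prop :=
  forall x y eps, 0 < eps -> exists n : nat, d (Nat.iter n T x) y < eps.

Definition factor_map {X Y : Type} (dX : X -> X -> R) (dY : Y -> Y -> R)
  (T : X -> X) (S : Y -> Y) (pi : X -> Y) : Prop :=
  continuous_map dX dY pi /\ surjective pi /\ (forall x, pi (T x) = S (pi x)).

Definition almost_one_to_one {X Y : Type} (dY : Y -> Y -> R) (pi : X -> Y) : Prop :=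
  forall y eps, 0 < eps -> exists y', dY y y' < eps /\
    exists x, forall x', pi x' = y' <-> x' = x.

Definition S_set {X : Type} (d : X -> X -> R) (T : X -> X) (U : X -> Prop)
  (delta : R) (n : nat) : Prop :=
  exists x1 x2, U x1 /\ U x2 /\ d (Nat.iter n T x1) (Nat.iter n T x2) > delta.

Definition J_set {X : Type} (d : X -> X -> R) (T : X -> X) (U : X -> Prop)
  (delta : R) (n : nat) : Prop :=
  ~ S_set d T U delta n.

Definition syndetic (A : nat -> Prop) : Prop :=
  exists L : nat, (0 < L)%nat /\
    forall m : nat, exists n : nat, (m <= n < m + L)%nat /\ A n.

Definition neighborhood {X : Type} (d : X -> X -> R) (x : X) (U : X -> Prop) : Prop :=
  exists V, is_open d V /\ V x /\ forall y, V y -> U y.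

Definition synd_equicont_point {X : Type} (d : X -> X -> R) (T : X -> X) (x : X) : Prop :=
  forall eps, 0 < eps -> exists U, neighborhood d x U /\ syndetic (J_set d T U eps).

Definition synd_equicont {X : Type} (d : X -> X -> R) (T : X -> X) : Prop :=
  forall x, synd_equicont_point d T x.

(* Main.v *)
Require Import Defs.
From Stdlib Require Import Reals List Lra Lia.
Open Scope R_scope.

Lemma iter_add' {A} (f : A -> A) n k x : Nat.iter (n + k) f x = Nat.iter n f (Nat.iter k f x).
Proof. induction n; simpl; [reflexivity| now rewrite IHn]. Qed.

Lemma iter_comm {X Y} (T : X -> X) (S : Y -> Y) (pi : X -> Y) :
  (forall x, pi (T x) = S (pi x)) -> forall n x, pi (Nat.iter n T x) = Nat.iter n S (pi x).
Proof. intros H n; induction n; intros x; simpl; [reflexivity| rewrite H, IHn; reflexivity]. Qed.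

Lemma cont_iter {X} d (T : X -> X) : continuous_map d d T -> forall k, continuous_map d d (Nat.iter k T).
Proof.
  intros hT k; induction k.
  - intros x eps he; exists eps; split; [exact he| intros x0 h; exact h].
  - intros x eps he. cbn. destruct (hT (Nat.iter k T x) eps he) as [d1 [hd1 H1]].
    destruct (IHk x d1 hd1) as [d2 [hd2 H2]]. exists d2; split; [exact hd2| intros x1 h; apply H1, H2, h].
Qed.

Lemma open_ext {X} (d : X -> X -> R) (U V : X -> Prop) : (forall z, U z <-> V z) -> is_open d V -> is_open d U.
Proof. intros H hV x hx. apply H in hx. destruct (hV x hx) as [r [hr Hr]]. exists r; split; auto. intros y hy; apply H; auto. Qed.

Lemma ball_open {X} (d : X -> X -> R) (c : X) r : is_metric d -> is_open d (fun z => d c z < r).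
Proof.
  intros [h0 [h1 [hs ht]]] x hx. exists (r - d c x); split; [lra|].
  intros y hy. specialize (ht c x y). lra.
Qed.

Lemma preimage_open {X Y} dX dY (f : X -> Y) (V : Y -> Prop) :
  continuous_map dX dY f -> is_open dY V -> is_open dX (fun z => V (f z)).
Proof.
  intros hf hV x hx. destruct (hV (f x) hx) as [r [hr Hr]].
  destruct (hf x r hr) as [dl [hdl Hd]]. exists dl; split; auto.
Qed.

Lemma list_min {A} (l : list A) (Q : R -> A -> Prop) :
  (forall a, In a l -> exists s, 0 < s /\ forall s', 0 < s' -> s' <= s -> Q s' a) ->
  exists s, 0 < s /\ forall s', 0 < s' -> s' <= s -> forall a, In a l -> Q s' a.
Proof.
  induction l as [|a l IH]; intros H.
  - exists 1; split; [lra| intros s' _ _ b []].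
  - destruct (H a (or_introl eq_refl)) as [s1 [hs1 H1]].
    destruct IH as [s2 [hs2 H2]]. { intros b hb; apply H; right; auto. }
    exists (Rmin s1 s2); split. { apply Rmin_pos; auto. }
    intros s' h0 hle b [<-|hb].
    + apply H1; auto. eapply Rle_trans; [exact hle| apply Rmin_l].
    + apply H2; auto. eapply Rle_trans; [exact hle| apply Rmin_r].
Qed.

Lemma list_max {A} (l : list A) (P : nat -> A -> Prop) :
  (forall a, In a l -> exists k, P k a) -> exists K, forall a, In a l -> exists k, (k < K)%nat /\ P k a.
Proof.
  induction l as [|a l IH]; intros H.
  - exists 0%nat; intros b [].
  - destruct (H a (or_introl eq_refl)) as [k1 H1].
    destruct IH as [K H2]. { intros b hb; apply H; right; auto. }
    exists (S (Nat.max k1 K)). intros b [<-|hb].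
    + exists k1; split; [lia|auto].
    + destruct (H2 b hb) as [k [hk hP]]; exists k; split; [lia|auto].
Qed.

Lemma unif_cont {X Y} dX dY (f : X -> Y) : is_metric dX -> is_compact dX -> is_metric dY ->
  continuous_map dX dY f -> forall eps, 0 < eps -> exists del, 0 < del /\
   forall a b, dX a b < del -> dY (f a) (f b) < eps.
Proof.
  intros mX cX [_ [_ [sY tY]]] hf eps he.
  pose proof mX as [h0X [h1X [sX tX]]].
  set (F := fun U : X -> Prop => exists x del, 0 < del /\
     (forall x', dX x x' < del -> dY (f x) (f x') < eps/2) /\
     forall z, U z <-> dX x z < del/2).
  destruct (cX F) as [l [hl hcov]].
  - intros U [x [dl [hdl [_ hU]]]]. eapply open_ext; [exact hU| apply ball_open; auto].
  - intros x. destruct (hf x (eps/2) ltac:(lra)) as [dl [hdl Hd]].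
    exists (fun z => dX x z < dl/2). split.
    + exists x, dl. split; [auto| split; [exact Hd| intros z; cbv beta; tauto]].
    + cbv beta. rewrite (proj2 (h1X x x) eq_refl); lra.
  - destruct (list_min l (fun s U => forall a b, U a -> dX a b < s -> dY (f a) (f b) < eps)) as [s [hs Hs]].
    + intros U hU. destruct (hl U hU) as [x [dl [hdl [Hd HU]]]].
      exists (dl/2); split; [lra|]. intros s' h0 hle a b ha hab.
      apply HU in ha.
      assert (h1 := Hd a ltac:(lra)). assert (h2 : dX x b < dl) by (specialize (tX x a b); lra).
      assert (h3 := Hd b h2). specialize (tY (f a) (f x) (f b)). rewrite (sY (f a) (f x)) in tY. lra.
    + exists s; split; auto. intros a b hab. destruct (hcov a) as [U [hU ha]].
      apply (Hs s hs (Rle_refl s) U hU a b ha hab).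
Qed.

Lemma fibre_lemma {X Y} dX dY (pi : X -> Y) x' y' r : is_metric dX -> is_compact dX -> is_metric dY ->
  continuous_map dX dY pi -> (forall z, pi z = y' <-> z = x') -> 0 < r ->
  exists s, 0 < s /\ forall z, dY y' (pi z) < s -> dX x' z < r.
Proof.
  intros mX cX mY hpi hfib hr.
  pose proof mY as [h0Y [h1Y [sY tY]]].
  pose proof mX as [h0X [h1X [sX tX]]].
  set (F := fun U : X -> Prop => (forall z, U z <-> dX x' z < r) \/
       exists s, 0 < s /\ forall z, U z <-> s < dY y' (pi z)).
  destruct (cX F) as [l [hl hcov]].
  - intros U [HU|[s [hs HU]]].
    + eapply open_ext; [exact HU| apply ball_open; auto].
    + eapply open_ext; [exact HU|]. apply (preimage_open dX dY pi (fun w => s < dY y' w)); auto.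
      intros w hw. exists (dY y' w - s); split; [lra|]. intros v hv. specialize (tY y' v w). rewrite (sY v w) in tY. lra.
  - intros z. destruct (Rlt_or_le (dX x' z) r) as [hz|hz].
    + exists (fun z => dX x' z < r); split; [left; intros; tauto| exact hz].
    + assert (hpos : 0 < dY y' (pi z)).
      { destruct (h0Y y' (pi z)) as [h|h]; auto. exfalso. symmetry in h. apply h1Y in h.
        assert (z = x') by (apply hfib; auto). subst z. rewrite (proj2 (h1X x' x') eq_refl) in hz. lra. }
      exists (fun w => dY y' (pi z) / 2 < dY y' (pi w)). split.
      * right; exists (dY y' (pi z)/2); split; [lra| intros; tauto].
      * cbv beta; lra.
  - destruct (list_min l (fun s U => (forall z, U z <-> dX x' z < r) \/ forall z, U z -> s < dY y' (pi z))) as [s [hs Hs]].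
    + intros U hU. destruct (hl U hU) as [HU|[s [hs HU]]].
      * exists 1; split; [lra|]. intros; left; auto.
      * exists s; split; auto. intros s' _ hle; right. intros z hz. apply HU in hz. lra.
    + exists s; split; auto. intros z hz. destruct (hcov z) as [U [hU Uz]].
      destruct (Hs s hs (Rle_refl _) U hU) as [HU|HU].
      * apply HU; auto.
      * apply HU in Uz. lra.
Qed.

Lemma min_cover {Y} dY (S : Y -> Y) y' c : is_metric dY -> is_compact dY -> continuous_map dY dY S -> minimal dY S -> 0 < c ->
  exists K, forall y, exists k, (k < K)%nat /\ dY y' (Nat.iter k S y) < c.
Proof.
  intros mY cY hS hmin hc.
  set (F := fun U : Y -> Prop => exists k, forall z, U z <-> dY y' (Nat.iter k S z) < c).
  destruct (cY F) as [l [hl hcov]].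
  - intros U [k HU]. eapply open_ext; [exact HU|].
    apply (preimage_open dY dY (Nat.iter k S) (fun w => dY y' w < c)); [apply cont_iter; auto| apply ball_open; auto].
  - intros y. destruct (hmin y y' c hc) as [k hk]. exists (fun z => dY y' (Nat.iter k S z) < c).
    split; [exists k; intros; tauto| cbv beta].
    destruct mY as [_ [_ [sY _]]]. rewrite sY; auto.
  - destruct (list_max l (fun k U => forall z, U z -> dY y' (Nat.iter k S z) < c)) as [K HK].
    + intros U hU. destruct (hl U hU) as [k HU]. exists k. intros z hz; apply HU; auto.
    + exists K. intros y. destruct (hcov y) as [U [hU Uy]]. destruct (HK U hU) as [k [hk Hk]]. exists k; split; auto.
Qed.

Lemma unif_cont_iters {Y} dY (S : Y -> Y) K c : is_metric dY -> is_compact dY -> continuous_map dY dY S -> 0 < c ->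
  exists del, 0 < del /\ forall k a b, (k < K)%nat -> dY a b < del -> dY (Nat.iter k S a) (Nat.iter k S b) < c.
Proof.
  intros mY cY hS hc.
  destruct (list_min (seq 0 K) (fun s k => forall a b, dY a b < s -> dY (Nat.iter k S a) (Nat.iter k S b) < c)) as [s [hs Hs]].
  - intros k _. destruct (unif_cont dY dY (Nat.iter k S) mY cY mY (cont_iter dY S hS k) c hc) as [dl [hdl H]].
    exists dl; split; auto. intros s' _ hle a b hab; apply H; lra.
  - exists s; split; auto. intros k a b hk hab. apply (Hs s hs (Rle_refl _) k); auto. apply in_seq; lia.
Qed.

Lemma transfer {X} d (T : X -> X) : is_metric d -> continuous_map d d T -> minimal d T ->
  (forall (x : X) eps, 0 < eps -> exists x0 U, neighborhood d x0 U /\ syndetic (J_set d T U eps)) ->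
  synd_equicont d T.
Proof.
  intros m hT hmin H x eps he.
  destruct (H x eps he) as [x0 [U [[V [hV [Vx0 VU]]] [L [hL HL]]]]].
  destruct (hV x0 Vx0) as [r [hr Hr]].
  destruct (hmin x x0 r hr) as [k hk].
  exists (fun z => V (Nat.iter k T z)). split.
  - exists (fun z => V (Nat.iter k T z)). split; [apply (preimage_open d d (Nat.iter k T) V); auto; apply cont_iter; auto|]. split; auto.
    apply Hr. destruct m as [_ [_ [s _]]]. rewrite s; auto.
  - exists (L + k)%nat. split; [lia|]. intros n0. destruct (HL n0) as [n [hn Jn]].
    exists (n + k)%nat. split; [lia|]. intros [x1 [x2 [h1 [h2 hd]]]]. apply Jn.
    exists (Nat.iter k T x1), (Nat.iter k T x2). split; [auto| split; [auto|]].
    rewrite !iter_add' in hd. exact hd.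
Qed.

Theorem proposition4p9 (X Y : Type) (dX : X -> X -> R) (dY : Y -> Y -> R)
  (T : X -> X) (S : Y -> Y) (pi : X -> Y)
  (hX : is_system dX T) (hY : is_system dY S)
  (hXmin : minimal dX T) (hYmin : minimal dY S)
  (hpi : factor_map dX dY T S pi) (h1 : almost_one_to_one dY pi) :
  synd_equicont dX T <-> synd_equicont dY S.
Proof.
  destruct hX as [mX [cX [hTc hTs]]]. destruct hY as [mY [cY [hSc hSs]]].
  destruct hpi as [hpic [hpis hcomm]].
  pose proof mY as [h0Y [h1Y [sY tY]]].
  pose proof mX as [h0X [h1X [sX tX]]].
  split.
  - intros HX. apply transfer; auto. intros y eps he.
    destruct (h1 y 1 ltac:(lra)) as [y' [_ [x' hfib]]].
    destruct (unif_cont dX dY pi mX cX mY hpic eps he) as [dl [hdl Hdl]].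
    destruct (HX x' (dl/2) ltac:(lra)) as [U [[V [hV [Vx' VU]]] [L [hL HL]]]].
    destruct (hV x' Vx') as [r [hr Hr]].
    destruct (fibre_lemma dX dY pi x' y' r mX cX mY hpic hfib hr) as [s [hs Hs]].
    exists y', (fun w => dY y' w < s). split.
    + exists (fun w => dY y' w < s); split; [apply ball_open; auto| split; [cbv beta; rewrite (proj2 (h1Y y' y') eq_refl); lra | auto]].
    + exists L; split; auto. intros m0. destruct (HL m0) as [n [hn Jn]]. exists n; split; auto.
      intros [v1 [v2 [hv1 [hv2 hd]]]].
      destruct (hpis v1) as [z1 <-]. destruct (hpis v2) as [z2 <-].
      rewrite <- !(iter_comm T S pi hcomm) in hd.
      destruct (Rle_or_lt (dX (Nat.iter n T z1) (Nat.iter n T z2)) (dl/2)) as [hle|hlt].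
      * assert (hh := Hdl (Nat.iter n T z1) (Nat.iter n T z2) ltac:(lra)). lra.
      * apply Jn. exists z1, z2. split; [apply VU, Hr, Hs; auto| split; [apply VU, Hr, Hs; auto| exact hlt]].
  - intros HY. apply transfer; auto. intros x eps he.
    destruct (h1 (pi x) 1 ltac:(lra)) as [y' [_ [x' hfib]]].
    destruct (fibre_lemma dX dY pi x' y' (eps/2) mX cX mY hpic hfib ltac:(lra)) as [s [hs Hs]].
    destruct (min_cover dY S y' (s/2) mY cY hSc hYmin ltac:(lra)) as [K HK].
    destruct (unif_cont_iters dY S K (s/2) mY cY hSc ltac:(lra)) as [dl [hdl Hdl]].
    destruct (HY y' (dl/2) ltac:(lra)) as [V [[V0 [hV0 [V0y' V0V]]] [L [hL HL]]]].
    destruct (hV0 y' V0y') as [r0 [hr0 Hr0]].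
    exists x', (fun z => dY y' (pi z) < r0). split.
    + exists (fun z => dY y' (pi z) < r0). split.
      { apply (preimage_open dX dY pi (fun w => dY y' w < r0)); auto; apply ball_open; auto. }
      split; auto. cbv beta. assert (Hp : pi x' = y') by (apply hfib; auto). rewrite Hp, (proj2 (h1Y y' y') eq_refl); lra.
    + exists (L + K)%nat; split; [lia|]. intros m0. destruct (HL m0) as [n [hn Jn]].
      destruct (HK (Nat.iter n S y')) as [k [hk Hk]].
      exists (n + k)%nat. split; [lia|].
      intros [z1 [z2 [hz1 [hz2 hd]]]].
      assert (Hclose : forall z, dY y' (pi z) < r0 -> dX x' (Nat.iter (n+k) T z) < eps/2).
      { intros z hz. apply Hs. rewrite Nat.add_comm, iter_add', !(iter_comm T S pi hcomm).
        assert (hA : dY (Nat.iter n S (pi z)) (Nat.iter n S y') < dl).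
        { destruct (Rle_or_lt (dY (Nat.iter n S (pi z)) (Nat.iter n S y')) (dl/2)) as [h|h]; [lra|].
          exfalso. apply Jn. exists (pi z), y'. split; [apply V0V, Hr0; auto| split; [apply V0V; auto| exact h]]. }
        assert (hB := Hdl k _ _ hk hA).
        specialize (tY y' (Nat.iter k S (Nat.iter n S y')) (Nat.iter k S (Nat.iter n S (pi z)))).
        rewrite (sY (Nat.iter k S (Nat.iter n S y'))) in tY. lra. }
      assert (c1 := Hclose z1 hz1). assert (c2 := Hclose z2 hz2).
      specialize (tX (Nat.iter (n + k) T z1) x' (Nat.iter (n + k) T z2)).
      rewrite (sX _ x') in tX. lra.
Qed.
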